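(* Let $n\ge 2$ and let $\mathcal{F}=\{f_i\}_{i=1}^k$ be a unit-norm tight frame for $\mathbb{R}^n$ (or $\mathbb{C}^n$). Suppose there exist an index set $I\subseteq\{1,\dots,k\}$ with $|I|=p$ and unit-norm vectors $g_1,\dots,g_q$ such that $\{f_i\}_{i\notin I}\cup\{g_j\}_{j=1}^q$ is a unit-norm tight frame. Then, writing $\tilde f_i$ for the diagram vector of $f_i$, the sum of all entries of the Gramian $(\langle\tilde f_j,\tilde f_i\rangle)_{i,j\notin I}$ of the $k-p$ remaining diagram vectors is at most $q^2$, i.e. $\sum_{i,j\notin I}\langle\tilde f_i,\tilde f_j\rangle\le q^2$.
   Context: A unit-norm tight frame is a sequence of unit vectors $\{h_i\}$ for which there is $\lambda>0$ with $\sum_i|\langle f,h_i\rangle|^2=\lambda\|f\|^2$ for all $f$. Diagram vectors: for $f\in\mathbb{R}^n$, $\tilde f=\frac{1}{\sqrt{n-1}}\,v\in\mathbb{R}^{n(n-1)}$, where $v$ has as entries the differences $f(i)^2-f(j)^2$ for each pair $i<j$ (each exactly once) together with the products $\sqrt{2n}\,f(i)f(j)$ for each pair $i<j$ (each exactly once). For $f\in\mathbb{C}^n$, $\tilde f=\frac{1}{\sqrt{n-1}}\,v\in\mathbb{C}^{3n(n-1)/2}$, where $v$ has as entries $f(i)\overline{f(i)}-f(j)\overline{f(j)}$ for each pair $i<j$ (each exactly once) together with $\sqrt{n}\,f(i)\overline{f(j)}$ for each ordered pair $i\neq j$ (each exactly once). *)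

(* Defs.v *)
From HB Require Import structures.
From mathcomp Require Import all_boot all_order all_algebra.
Set Implicit Arguments. Unset Strict Implicit. Unset Printing Implicit Defensive.
Import Order.TTheory GRing.Theory Num.Theory.
Local Open Scope ring_scope.

Definition pairs_lt (n : nat) := {p : 'I_n * 'I_n | (p.1 < p.2)%N}.
Definition pairs_neq (n : nat) := {p : 'I_n * 'I_n | p.1 != p.2}.

Section Real.
Variable R : rcfType.

Definition dotR (T : finType) (u v : T -> R) : R := \sum_(x : T) u x * v x.

Definition untfR (n : nat) (T : finType) (h : T -> 'I_n -> R) : Prop :=
  (forall t, dotR (h t) (h t) = 1) /\
  exists2 lam : R, 0 < lam &
    forall x : 'I_n -> R, \sum_(t : T) (dotR x (h t)) ^+ 2 = lam * dotR x x.

(* diagram vector in R^{n(n-1)}, entries indexed by (i<j) twice *)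
Definition diagR (n : nat) (f : 'I_n -> R) : pairs_lt n + pairs_lt n -> R :=
  fun e => match e with
  | inl p => (f (val p).1 ^+ 2 - f (val p).2 ^+ 2) / Num.sqrt (n.-1)%:R
  | inr p => Num.sqrt (2 * n)%:R * (f (val p).1 * f (val p).2) / Num.sqrt (n.-1)%:R
  end.
End Real.

Section Complex.
Variable C : numClosedFieldType.

Definition dotC (T : finType) (u v : T -> C) : C := \sum_(x : T) u x * (v x)^*.

Definition untfC (n : nat) (T : finType) (h : T -> 'I_n -> C) : Prop :=
  (forall t, dotC (h t) (h t) = 1) /\
  exists2 lam : C, 0 < lam &
    forall x : 'I_n -> C, \sum_(t : T) `|dotC x (h t)| ^+ 2 = lam * dotC x x.

(* diagram vector in C^{3n(n-1)/2}: entries indexed by (i<j) and by (i<>j) *)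
Definition diagC (n : nat) (f : 'I_n -> C) : pairs_lt n + pairs_neq n -> C :=
  fun e => match e with
  | inl p => (f (val p).1 * (f (val p).1)^* - f (val p).2 * (f (val p).2)^*)
               / sqrtC (n.-1)%:R
  | inr p => sqrtC n%:R * (f (val p).1 * (f (val p).2)^*) / sqrtC (n.-1)%:R
  end.
End Complex.

Definition replace_fam (V : Type) (k q : nat) (f : 'I_k -> V) (I : {set 'I_k})
  (g : 'I_q -> V) : {i : 'I_k | i \notin I} + 'I_q -> V :=
  fun e => match e with inl i => f (val i) | inr j => g j end.
Arguments replace_fam {V k q} f I g _.
Arguments untfR {R n T} h.
Arguments untfC {C n T} h.
Arguments dotR {R T} u v.
Arguments dotC {C T} u v.
Arguments diagR {R n} f _.
Arguments diagC {C n} f _.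

(* Main.v *)
Require Import Defs.
From HB Require Import structures.
From mathcomp Require Import all_boot all_order all_algebra.
From mathcomp Require Import ring lra.
Import Order.TTheory GRing.Theory Num.Theory.
Local Open Scope ring_scope.


Section Gen.
Variable K : comNzRingType.

Lemma big_sigP (T : finType) (P : pred T) (F : T -> K) :
  \sum_(x : {x | P x}) F (val x) = \sum_(x | P x) F x.
Proof.
rewrite (reindex_omap (val : {x | P x} -> T) insub); last first.
  by move=> i Pi; rewrite insubT.
by apply: eq_bigl=> -[i iA]/=; rewrite insubT ?iA /= eqxx.
Qed.

Lemma sum_lt n (phi : 'I_n -> 'I_n -> K) :
  \sum_(p : pairs_lt n) phi (val p).1 (val p).2 =
  \sum_(u : 'I_n) \sum_(v : 'I_n) (if (u < v)%N then phi u v else 0).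
Proof.
rewrite (@big_sigP _ (fun p : 'I_n * 'I_n => (p.1 < p.2)%N) (fun p => phi p.1 p.2)).
rewrite pair_bigA big_mkcond /=. by [].
Qed.

Lemma sum_neq n (phi : 'I_n -> 'I_n -> K) :
  \sum_(p : pairs_neq n) phi (val p).1 (val p).2 =
  \sum_(u : 'I_n) \sum_(v : 'I_n) (if u != v then phi u v else 0).
Proof.
rewrite (@big_sigP _ (fun p : 'I_n * 'I_n => p.1 != p.2) (fun p => phi p.1 p.2)).
rewrite pair_bigA big_mkcond /=. by [].
Qed.

Lemma sum_split n (phi : 'I_n -> 'I_n -> K) : (forall u v, phi u v = phi v u) ->
  \sum_(u : 'I_n) \sum_(v : 'I_n) phi u v =
  2%:R * \sum_(u : 'I_n) \sum_(v : 'I_n) (if (u < v)%N then phi u v else 0) + \sum_u phi u u.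
Proof.
move=> sym.
have E : forall u v, phi u v = (if (u < v)%N then phi u v else 0)
   + (if (v < u)%N then phi v u else 0) + (if u == v then phi u v else 0).
  move=> u v; case: (eqVneq u v) => [->|neq]; first by rewrite ltnn !add0r.
  case: ltngtP => h.
  - by rewrite !addr0.
  - by rewrite add0r addr0 sym.
  - by case/eqP: neq; apply: val_inj.
rewrite (eq_bigr (fun u : 'I_n => \sum_(v : 'I_n) ((if (u < v)%N then phi u v else 0)
   + (if (v < u)%N then phi v u else 0) + (if u == v then phi u v else 0)))); last first.
  by move=> u _; apply: eq_bigr => v _; rewrite -E.
rewrite (eq_bigr (fun u : 'I_n => \sum_(v : 'I_n) (if (u < v)%N then phi u v else 0)
   + \sum_(v : 'I_n) (if (v < u)%N then phi v u else 0) + phi u u)); last first.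
  move=> u _; rewrite !big_split /=; congr (_ + _).
  by rewrite -big_mkcond (big_pred1 u) // => i; rewrite /= eq_sym.
rewrite !big_split /= [X in _ + X + _]exchange_big /= mulr_natl mulr2n.
by [].
Qed.

Lemma sum_split_neq n (phi : 'I_n -> 'I_n -> K) : (forall u v, phi u v = phi v u) ->
  \sum_(u : 'I_n) \sum_(v : 'I_n) (if u != v then phi u v else 0) =
  2%:R * \sum_(u : 'I_n) \sum_(v : 'I_n) (if (u < v)%N then phi u v else 0).
Proof.
move=> sym.
rewrite (eq_bigr (fun u : 'I_n => \sum_(v : 'I_n) ((if (u < v)%N then phi u v else 0)
   + (if (v < u)%N then phi v u else 0)))); last first.
  move=> u _; apply: eq_bigr => v _.
  case: (eqVneq u v) => [->|neq]; first by rewrite ltnn add0r.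
  case: ltngtP => h.
  - by rewrite addr0.
  - by rewrite add0r sym.
  - by case/eqP: neq; apply: val_inj.
rewrite (eq_bigr (fun u : 'I_n => \sum_(v : 'I_n) (if (u < v)%N then phi u v else 0)
   + \sum_(v : 'I_n) (if (v < u)%N then phi v u else 0))); last first.
  by move=> u _; rewrite big_split.
rewrite big_split /= [X in _ + X]exchange_big /=.
by rewrite mulr_natl mulr2n.
Qed.
End Gen.



Lemma sumsq (K : comNzRingType) n (b : 'I_n -> K) :
  \sum_(u : 'I_n) \sum_(v : 'I_n) b u * b v = (\sum_u b u) ^+ 2.
Proof.
rewrite expr2 mulr_suml; apply: eq_bigr => u _; by rewrite mulr_sumr.
Qed.

Lemma full1 (K : comNzRingType) n (b : 'I_n -> K) :
  \sum_(u : 'I_n) \sum_(v : 'I_n) (b u - b v) ^+ 2 =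
  2%:R * n%:R * \sum_u b u ^+ 2 - 2%:R * (\sum_u b u) ^+ 2.
Proof.
rewrite -sumsq.
have -> : \sum_(u : 'I_n) \sum_(v : 'I_n) (b u - b v) ^+ 2 =
  \sum_(u : 'I_n) \sum_(v : 'I_n) (b u ^+ 2 + b v ^+ 2 - 2%:R * (b u * b v)).
  by apply: eq_bigr => u _; apply: eq_bigr => v _; ring.
rewrite (eq_bigr (fun u : 'I_n => n%:R * b u ^+ 2 + \sum_(v : 'I_n) b v ^+ 2
      - 2%:R * \sum_(v : 'I_n) (b u * b v))); last first.
  move=> u _; rewrite sumrB big_split /= sumr_const card_ord -mulr_sumr.
  by rewrite [in RHS]mulr_natl.
have e1 : \sum_(i < n) n%:R * b i ^+ 2 = n%:R * \sum_(i < n) b i ^+ 2 by rewrite mulr_sumr.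
have e2 : \sum_(i < n) 2%:R * \sum_(v < n) b i * b v = 2%:R * \sum_(i < n) \sum_(v < n) b i * b v
  by rewrite mulr_sumr.
rewrite sumrB big_split /= e1 e2 sumr_const card_ord; ring.
Qed.

Lemma core (K : numDomainType) n (b : 'I_n -> K) :
  \sum_(p : pairs_lt n) (b (val p).1 - b (val p).2) ^+ 2
  + n%:R * \sum_(p : pairs_neq n) b (val p).1 * b (val p).2
  = (n.-1)%:R * (\sum_u b u) ^+ 2.
Proof.
rewrite (@sum_lt _ _ (fun u v => (b u - b v) ^+ 2)) (@sum_neq _ _ (fun u v => b u * b v)).
rewrite sum_split_neq; last by move=> u v; rewrite mulrC.
set X := \sum_(u : 'I_n) _.
set Y := \sum_(u : 'I_n) _.
have h1 : 2%:R * X = 2%:R * n%:R * \sum_u b u ^+ 2 - 2%:R * (\sum_u b u) ^+ 2.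
  rewrite -full1 (@sum_split _ _ (fun u v => (b u - b v) ^+ 2)); last by move=> u v; rewrite -opprB sqrrN.
  by rewrite [\sum_u (b u - b u) ^+ 2]big1 ?addr0 // => u _; rewrite subrr expr0n.
have h2 : (\sum_u b u) ^+ 2 = 2%:R * Y + \sum_u b u ^+ 2.
  rewrite -sumsq (@sum_split _ _ (fun u v => b u * b v)); last by move=> u v; rewrite mulrC.
  by congr (_ + _); apply: eq_bigr => u _; rewrite expr2.
have h2' : 2%:R * X = 2%:R * ((n%:R - 1) * (\sum_u b u) ^+ 2 - n%:R * (2%:R * Y)).
  rewrite h1 h2; ring.
have /mulfI h3 : (2%:R : K) != 0 by rewrite pnatr_eq0.
move/h3: h2' => ->.
case: n b X Y h1 h2 h3 => [|n] b X Y _ _ _ /=; last by rewrite -natr1; ring.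
rewrite !big_ord0; ring.
Qed.



Section RealPart.
Variable R : rcfType.

Lemma dotR_sum (E J1 J2 : finType) (P1 : pred J1) (P2 : pred J2)
  (x : J1 -> E -> R) (y : J2 -> E -> R) :
  dotR (fun e => \sum_(j | P1 j) x j e) (fun e => \sum_(l | P2 l) y l e) =
  \sum_(j | P1 j) \sum_(l | P2 l) dotR (x j) (y l).
Proof.
rewrite /dotR.
under eq_bigr do rewrite big_distrlr /=.
rewrite exchange_big /=; apply: eq_bigr => j _.
by rewrite exchange_big.
Qed.

Lemma dotR_am (E : finType) (a b : E -> R) :
  2%:R * dotR a b <= dotR a a + dotR b b.
Proof.
rewrite -subr_ge0.
have -> : dotR a a + dotR b b - 2%:R * dotR a b = \sum_e (a e - b e) ^+ 2.
  rewrite /dotR mulr_sumr -big_split /= -sumrB; apply: eq_bigr => e _; ring.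
by apply: sumr_ge0 => e _; apply: sqr_ge0.
Qed.

Lemma dotR_sum_le (E J : finType) (x : J -> E -> R) :
  dotR (fun e => \sum_j x j e) (fun e => \sum_j x j e) <=
  #|J|%:R * \sum_j dotR (x j) (x j).
Proof.
rewrite dotR_sum.
have h2 : (0 : R) < 2%:R by [].
rewrite -(ler_pM2l h2) mulr_sumr.
apply: le_trans (_ : \sum_j \sum_l (dotR (x j) (x j) + dotR (x l) (x l)) <= _).
  apply: ler_sum => j _; rewrite mulr_sumr; apply: ler_sum => l _; exact: dotR_am.
rewrite le_eqVlt; apply/orP; left; apply/eqP.
rewrite (eq_bigr (fun j => #|J|%:R * dotR (x j) (x j) + \sum_l dotR (x l) (x l))); last first.
  by move=> j _; rewrite big_split /= sumr_const mulr_natl.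
rewrite big_split /= sumr_const -mulr_sumr -mulr_natl; ring.
Qed.

Lemma dotR_e (n : nat) (u : 'I_n) (h : 'I_n -> R) :
  dotR (fun w => (w == u)%:R) h = h u.
Proof.
rewrite /dotR (bigD1 u) //= eqxx mul1r big1 ?addr0 // => w /negbTE ->.
by rewrite mul0r.
Qed.

Lemma tight_entriesR (n : nat) (T : finType) (h : T -> 'I_n -> R) (lam : R) :
  (forall x : 'I_n -> R, \sum_(t : T) (dotR x (h t)) ^+ 2 = lam * dotR x x) ->
  (forall u, \sum_t h t u ^+ 2 = lam) /\
  (forall u v, u != v -> \sum_t h t u * h t v = 0).
Proof.
move=> H.
have H1 : forall u, \sum_t h t u ^+ 2 = lam.
  move=> u; move: (H (fun w => (w == u)%:R)).
  under eq_bigr do rewrite dotR_e.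
  by rewrite dotR_e eqxx mulr1.
split=> // u v neq.
move: (H (fun w => (w == u)%:R + (w == v)%:R)).
have dx : forall g : 'I_n -> R,
    dotR (fun w => (w == u)%:R + (w == v)%:R) g = g u + g v.
  move=> g; rewrite /dotR.
  under eq_bigr do rewrite mulrDl.
  by rewrite big_split /= -!/(dotR _ _) !dotR_e.
under eq_bigr do rewrite dx.
rewrite dx !eqxx (negbTE neq) eq_sym (negbTE neq) /=.
have -> : \sum_t (h t u + h t v) ^+ 2 =
   \sum_t h t u ^+ 2 + \sum_t h t v ^+ 2 + 2%:R * \sum_t h t u * h t v.
  rewrite mulr_sumr -!big_split /=; apply: eq_bigr => t _; ring.
rewrite !H1 => e.
have : lam + lam + 2%:R * \sum_t h t u * h t v = lam + lam + 0 by rewrite e; ring.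
by move/addrI/eqP; rewrite mulf_eq0 pnatr_eq0 /= => /eqP.
Qed.

Lemma diag_sum0R (n : nat) (T : finType) (h : T -> 'I_n -> R) :
  untfR h -> forall e, \sum_t diagR (h t) e = 0.
Proof.
case=> _ [lam _ H]; have [H1 H2] := @tight_entriesR n T h lam H.
case=> p /=.
  rewrite -mulr_suml sumrB !H1 subrr mul0r //.
rewrite -mulr_suml -mulr_sumr H2 ?mulr0 ?mul0r //.
case: p => -[a b] /= lt; by rewrite neq_ltn lt.
Qed.

End RealPart.



Lemma diag_normR (R : rcfType) (n : nat) (g : 'I_n -> R) : (2 <= n)%N ->
  dotR (diagR g) (diagR g) = (dotR g g) ^+ 2.
Proof.
move=> n2.
set s := Num.sqrt (n.-1)%:R : R.
set c := Num.sqrt (2 * n)%:R : R.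
have hs : s ^+ 2 = (n.-1)%:R by rewrite sqr_sqrtr // ler0n.
have hc : c ^+ 2 = (2 * n)%:R by rewrite sqr_sqrtr // ler0n.
have sn0 : s != 0.
  by rewrite /s sqrtr_eq0 -ltNge ltr0n; case: n n2 {s c hs hc g} => [|[|n]].
set b := fun u => g u ^+ 2.
have e1 : \sum_(p : pairs_lt n) diagR g (inl p) * diagR g (inl p) =
   (\sum_(p : pairs_lt n) (b (val p).1 - b (val p).2) ^+ 2) / s ^+ 2.
  rewrite mulr_suml; apply: eq_bigr => p _ /=; rewrite /b -/s; field; exact: sn0.
have e2 : \sum_(p : pairs_lt n) diagR g (inr p) * diagR g (inr p) =
   (n%:R * \sum_(p : pairs_neq n) b (val p).1 * b (val p).2) / s ^+ 2.
  rewrite (@sum_neq _ _ (fun u v => b u * b v)) sum_split_neq; last by move=> u v; rewrite mulrC.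
  rewrite -(@sum_lt _ _ (fun u v => b u * b v)) !mulr_sumr mulr_suml.
  apply: eq_bigr => p _ /=; rewrite /b.
  rewrite -/s -/c.
  set x := g (sval p).1; set y := g (sval p).2.
  have -> : n%:R * (2%:R * (x ^+ 2 * y ^+ 2)) = c ^+ 2 * (x * y) ^+ 2 :> R.
    by rewrite hc natrM; ring.
  field; exact: sn0.
rewrite /dotR big_sumType /= e1 e2 -mulrDl core hs mulrC mulKf ?pnatr_eq0 -?lt0n.
  by congr (_ ^+ 2); apply: eq_bigr => u _; rewrite /b expr2.
by case: n n2 {s c hs hc g sn0 b e1 e2} => [|[|n]].
Qed.



Lemma realcase (R : rcfType) (n k p q : nat) (f : 'I_k -> 'I_n -> R)
     (I : {set 'I_k}) (g : 'I_q -> 'I_n -> R) :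
     (2 <= n)%N -> untfR f -> #|I| = p ->
     (forall j, dotR (g j) (g j) = 1) ->
     untfR (replace_fam f I g) ->
     \sum_(i : 'I_k | i \notin I) \sum_(j : 'I_k | j \notin I)
        dotR (diagR (f j)) (diagR (f i)) <= (q ^ 2)%:R.
Proof.
move=> n2 _ _ gn H.
have H0 := @diag_sum0R _ _ _ _ H.
rewrite exchange_big /= -dotR_sum.
set F := fun e : pairs_lt n + pairs_lt n => \sum_(i : 'I_k | i \notin I) diagR (f i) e.
set G := fun e => \sum_(j : 'I_q) diagR (g j) e.
have FG : forall e, F e = - G e.
  move=> e; apply/eqP; rewrite -addr_eq0; apply/eqP.
  move: (H0 e); rewrite big_sumType /=.
  by rewrite (@big_sigP _ _ (fun i => i \notin I) (fun i => diagR (f i) e)).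
have -> : dotR F F = dotR G G.
  by rewrite /dotR; apply: eq_bigr => e _; rewrite FG mulrNN.
apply: le_trans (@dotR_sum_le R _ _ (fun j => diagR (g j))) _.
rewrite card_ord (eq_bigr (fun _ => 1)); last by move=> j _; rewrite diag_normR // gn expr1n.
by rewrite sumr_const card_ord natrX expr2 mulr_natr.
Qed.



Section ComplexPart.
Variable C : numClosedFieldType.

Lemma dotC_sum (E J1 J2 : finType) (P1 : pred J1) (P2 : pred J2)
  (x : J1 -> E -> C) (y : J2 -> E -> C) :
  dotC (fun e => \sum_(j | P1 j) x j e) (fun e => \sum_(l | P2 l) y l e) =
  \sum_(j | P1 j) \sum_(l | P2 l) dotC (x j) (y l).
Proof.
rewrite /dotC.
under eq_bigr do rewrite rmorph_sum big_distrlr /=.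
rewrite exchange_big /=; apply: eq_bigr => j _.
by rewrite exchange_big.
Qed.

Lemma dotC_am (E : finType) (a b : E -> C) :
  dotC a b + dotC b a <= dotC a a + dotC b b.
Proof.
rewrite -subr_ge0.
have -> : dotC a a + dotC b b - (dotC a b + dotC b a) = \sum_e (a e - b e) * (a e - b e)^*.
  rewrite /dotC -!big_split /= -sumrB; apply: eq_bigr => e _; rewrite rmorphB; ring.
by apply: sumr_ge0 => e _; apply: mul_conjC_ge0.
Qed.

Lemma dotC_sum_le (E J : finType) (x : J -> E -> C) :
  dotC (fun e => \sum_j x j e) (fun e => \sum_j x j e) <=
  #|J|%:R * \sum_j dotC (x j) (x j).
Proof.
rewrite dotC_sum.
have h2 : (0 : C) < 2%:R by rewrite ltr0n.
rewrite -(ler_pM2l h2).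
have -> : 2%:R * \sum_j \sum_l dotC (x j) (x l) =
    \sum_j \sum_l (dotC (x j) (x l) + dotC (x l) (x j)).
  rewrite [RHS](eq_bigr (fun j => \sum_l dotC (x j) (x l) + \sum_l dotC (x l) (x j)));
    last by move=> j _; rewrite big_split.
  by rewrite big_split /= [X in _ + X]exchange_big /= mulr_natl mulr2n.
apply: le_trans (_ : \sum_j \sum_l (dotC (x j) (x j) + dotC (x l) (x l)) <= _).
  apply: ler_sum => j _; apply: ler_sum => l _; exact: dotC_am.
rewrite le_eqVlt; apply/orP; left; apply/eqP.
rewrite (eq_bigr (fun j => #|J|%:R * dotC (x j) (x j) + \sum_l dotC (x l) (x l))); last first.
  by move=> j _; rewrite big_split /= sumr_const mulr_natl.
rewrite big_split /= sumr_const -mulr_sumr -mulr_natl; ring.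
Qed.

Lemma dotC_e2 (n : nat) (u v : 'I_n) (a : C) (h : 'I_n -> C) : u != v ->
  dotC (fun w => (w == u)%:R + a * (w == v)%:R) h = (h u)^* + a * (h v)^*.
Proof.
move=> neq; rewrite /dotC (bigD1 u) //= (bigD1 v) 1?eq_sym //=.
have nvu : (v == u) = false by rewrite eq_sym (negbTE neq).
rewrite !eqxx nvu big1 ?addr0 /=; first by ring.
by move=> w /andP[/negbTE -> /negbTE ->] /=; ring.
Qed.

Lemma dotC_e (n : nat) (u : 'I_n) (h : 'I_n -> C) :
  dotC (fun w => (w == u)%:R) h = (h u)^*.
Proof.
rewrite /dotC (bigD1 u) //= eqxx mul1r big1 ?addr0 // => w /negbTE ->.
by rewrite mul0r.
Qed.

Lemma tight_entriesC (n : nat) (T : finType) (h : T -> 'I_n -> C) (lam : C) :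
  (forall x : 'I_n -> C, \sum_(t : T) `|dotC x (h t)| ^+ 2 = lam * dotC x x) ->
  (forall u, \sum_t h t u * (h t u)^* = lam) /\
  (forall u v, u != v -> \sum_t h t u * (h t v)^* = 0).
Proof.
move=> H.
have H1 : forall u, \sum_t h t u * (h t u)^* = lam.
  move=> u; move: (H (fun w => (w == u)%:R)).
  under eq_bigr do rewrite dotC_e normCK conjCK.
  rewrite dotC_e eqxx rmorph1 mulr1 => <-.
  by apply: eq_bigr => t _; rewrite mulrC.
split=> // u v neq.
set P := \sum_t h t u * (h t v)^*.
set Q := \sum_t (h t u)^* * h t v.
have key : forall a : C, a^* * Q + a * P = 0.
  move=> a; move: (H (fun w => (w == u)%:R + a * (w == v)%:R)).
  have nvu : (v == u) = false by rewrite eq_sym (negbTE neq).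
  have dxx : dotC (fun w => (w == u)%:R + a * (w == v)%:R)
                  (fun w => (w == u)%:R + a * (w == v)%:R) = 1 + a * a^*.
    rewrite dotC_e2 // !eqxx nvu (negbTE neq) /= mulr0 addr0 add0r mulr1 rmorph1.
    by [].
  rewrite dxx.
  under eq_bigr do rewrite dotC_e2 // normCK rmorphD /= rmorphM /= !conjCK.
  have -> : \sum_t ((h t u)^* + a * (h t v)^*) * (h t u + a^* * h t v) =
     \sum_t h t u * (h t u)^* + a * a^* * \sum_t h t v * (h t v)^*
       + (a^* * Q + a * P).
    rewrite /P /Q !mulr_sumr -!big_split /=; apply: eq_bigr => t _; ring.
  rewrite !H1 => e.
  have : lam + a * a^* * lam + (a^* * Q + a * P) = lam + a * a^* * lam + 0.
    by rewrite e; ring.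
  by move/addrI.
have k1 := key 1; have k2 := key 'i.
rewrite rmorph1 !mul1r in k1.
rewrite conjCi in k2.
have : 'i * (2%:R * P) = 0.
  have -> : 'i * (2%:R * P) = - 'i * Q + 'i * P + 'i * (Q + P) by ring.
  by rewrite k1 k2; ring.
move/eqP; rewrite !mulf_eq0 pnatr_eq0 (negbTE (neq0Ci C)) /= => /eqP //.
Qed.

End ComplexPart.



Lemma diag_sum0C (C : numClosedFieldType) (n : nat) (T : finType) (h : T -> 'I_n -> C) :
  untfC h -> forall e, \sum_t diagC (h t) e = 0.
Proof.
case=> _ [lam _ H]; have [H1 H2] := @tight_entriesC C n T h lam H.
case=> p /=.
  rewrite -mulr_suml sumrB !H1 subrr mul0r //.
rewrite -mulr_suml -mulr_sumr H2 ?mulr0 ?mul0r //.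
by case: p.
Qed.

Lemma diag_normC (C : numClosedFieldType) (n : nat) (g : 'I_n -> C) : (2 <= n)%N ->
  dotC (diagC g) (diagC g) = (dotC g g) ^+ 2.
Proof.
move=> n2.
set s := sqrtC (n.-1)%:R : C.
set c := sqrtC n%:R : C.
have hs : s ^+ 2 = (n.-1)%:R by rewrite sqrtCK.
have hc : c ^+ 2 = n%:R by rewrite sqrtCK.
have sc : s^* = s by rewrite geC0_conj // sqrtC_ge0 ler0n.
have cc : c^* = c by rewrite geC0_conj // sqrtC_ge0 ler0n.
have sn0 : s != 0.
  have : s ^+ 2 != 0.
    by rewrite hs pnatr_eq0; case: n n2 {s c hs hc g sc cc} => [|[|n]].
  by rewrite expf_eq0.
set b := fun u => g u * (g u)^*.
have bc : forall u, (b u)^* = b u by move=> u; rewrite /b rmorphM /= conjCK mulrC.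
have e1 : \sum_(p : pairs_lt n) diagC g (inl p) * (diagC g (inl p))^* =
   (\sum_(p : pairs_lt n) (b (val p).1 - b (val p).2) ^+ 2) / s ^+ 2.
  rewrite mulr_suml; apply: eq_bigr => p _ /=.
  rewrite -/s -/(b _) -/(b _) rmorphM /= rmorphB /= !bc fmorphV /= sc.
  field; exact: sn0.
have e2 : \sum_(p : pairs_neq n) diagC g (inr p) * (diagC g (inr p))^* =
   (n%:R * \sum_(p : pairs_neq n) b (val p).1 * b (val p).2) / s ^+ 2.
  rewrite mulr_sumr mulr_suml; apply: eq_bigr => p _ /=.
  rewrite -/s -/c !rmorphM /= fmorphV /= sc cc conjCK.
  rewrite /b -hc; field; exact: sn0.
rewrite /dotC big_sumType /= e1 e2 -mulrDl core hs mulrC mulKf ?pnatr_eq0 -?lt0n.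
  by [].
by case: n n2 {s c hs hc g sn0 b e1 e2 sc cc bc} => [|[|n]].
Qed.



Lemma complexcase (C : numClosedFieldType) (n k p q : nat) (f : 'I_k -> 'I_n -> C)
     (I : {set 'I_k}) (g : 'I_q -> 'I_n -> C) :
     (2 <= n)%N -> untfC f -> #|I| = p ->
     (forall j, dotC (g j) (g j) = 1) ->
     untfC (replace_fam f I g) ->
     \sum_(i : 'I_k | i \notin I) \sum_(j : 'I_k | j \notin I)
        dotC (diagC (f j)) (diagC (f i)) <= (q ^ 2)%:R.
Proof.
move=> n2 _ _ gn H.
have H0 := @diag_sum0C _ _ _ _ H.
rewrite exchange_big /= -dotC_sum.
set F := fun e : pairs_lt n + pairs_neq n => \sum_(i : 'I_k | i \notin I) diagC (f i) e.
set G := fun e : pairs_lt n + pairs_neq n => \sum_(j : 'I_q) diagC (g j) e.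
have FG : forall e, F e = - G e.
  move=> e; apply/eqP; rewrite -addr_eq0; apply/eqP.
  move: (H0 e); rewrite big_sumType /=.
  by rewrite (@big_sigP _ _ (fun i => i \notin I) (fun i => diagC (f i) e)).
have -> : dotC F F = dotC G G.
  by rewrite /dotC; apply: eq_bigr => e _; rewrite !FG rmorphN mulrNN.
apply: le_trans (@dotC_sum_le C _ _ (fun j => diagC (g j))) _.
rewrite card_ord (eq_bigr (fun _ => 1)); last by move=> j _; rewrite diag_normC // gn expr1n.
by rewrite sumr_const card_ord natrX expr2 mulr_natr.
Qed.


Theorem theorem3p1 :
  (* real case *)
  (forall (R : rcfType) (n k p q : nat) (f : 'I_k -> 'I_n -> R)
     (I : {set 'I_k}) (g : 'I_q -> 'I_n -> R),
     (2 <= n)%N -> untfR f -> #|I| = p ->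
     (forall j, dotR (g j) (g j) = 1) ->
     untfR (replace_fam f I g) ->
     \sum_(i : 'I_k | i \notin I) \sum_(j : 'I_k | j \notin I)
        dotR (diagR (f j)) (diagR (f i)) <= (q ^ 2)%:R) /\
  (* complex case *)
  (forall (C : numClosedFieldType) (n k p q : nat) (f : 'I_k -> 'I_n -> C)
     (I : {set 'I_k}) (g : 'I_q -> 'I_n -> C),
     (2 <= n)%N -> untfC f -> #|I| = p ->
     (forall j, dotC (g j) (g j) = 1) ->
     untfC (replace_fam f I g) ->
     \sum_(i : 'I_k | i \notin I) \sum_(j : 'I_k | j \notin I)
        dotC (diagC (f j)) (diagC (f i)) <= (q ^ 2)%:R).
Proof.
split=> *; [exact: realcase | exact: complexcase].
Qed.
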